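(* Let $A\in\mathbb{R}^{m\times n}$, let $X_0\in\mathbb{R}^{n\times m}$, and define iterates $$X_{k+1} = X_k - A^\top A S_k\,(S_k^\top A^\top A A^\top A S_k)^\dagger S_k^\top A^\top (A X_k - I),\qquad k\ge 0,$$ for arbitrary matrices $S_k\in\mathbb{R}^{m\times\tau}$. If $\mathrm{Range}(X_0)\subset\mathrm{Range}(A^\top A)$, then $\mathrm{Range}(X_k - A^\dagger)\subset\mathrm{Range}(A^\top A)$ for all $k$.
   Context: $M^\dagger$ denotes the Moore–Penrose pseudoinverse and $\mathrm{Range}(M)$ the column space of a real matrix $M$. *)

(* Defs.v *)
From HB Require Import structures.
From Stdlib Require Import ClassicalEpsilon.
From mathcomp Require Import all_boot all_order all_algebra.
From mathcomp Require Import reals.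
Set Implicit Arguments. Unset Strict Implicit. Unset Printing Implicit Defensive.
Import GRing.Theory Num.Theory.
Local Open Scope ring_scope.

Definition penrose (R : realType) (m n : nat) (A : 'M[R]_(m, n)) (X : 'M[R]_(n, m)) : Prop :=
  [/\ A *m X *m A = A, X *m A *m X = X, (A *m X)^T = A *m X & (X *m A)^T = X *m A].

Definition pinv (R : realType) (m n : nat) (A : 'M[R]_(m, n)) : 'M[R]_(n, m) :=
  epsilon (inhabits 0) (penrose A).

(* Range(M) \subset Range(N), i.e. the column space of M is contained in the
   column space of N (= row space of M^T contained in row space of N^T). *)
Definition range_sub (R : realType) (p q r : nat) (M : 'M[R]_(p, q)) (N : 'M[R]_(p, r)) : bool :=
  (M^T <= N^T)%MS.

(* Main.v *)
Require Import Defs.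
From HB Require Import structures.
From Stdlib Require Import ClassicalEpsilon.
From mathcomp Require Import all_boot all_order all_algebra.
From mathcomp Require Import reals.
Import GRing.Theory Num.Theory.
Local Open Scope ring_scope.

Lemma sq_ker (R : realType) p q k (U : 'M[R]_(k, p)) (B : 'M[R]_(p, q)) :
  U *m B *m B^T = 0 -> U *m B = 0.
Proof.
move=> H.
have H2 : (U *m B) *m (U *m B)^T = 0 by rewrite trmx_mul mulmxA H mul0mx.
move: H2; set V := U *m B => H2; clearbody V.
apply/matrixP => i j.
have := congr1 (fun M : 'M[R]_k => M i i) H2.
rewrite !mxE => /psumr_eq0P Hs.
have pos : forall l : 'I_q, true -> 0 <= V i l * V^T l i.
  by move=> l _; rewrite mxE -expr2 sqr_ge0.
have := Hs pos j isT.
rewrite [V^T _ _]mxE => /eqP; rewrite mulf_eq0 orbb => /eqP //.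
Qed.

Lemma gram_unit (R : realType) p q (B : 'M[R]_(p, q)) :
  row_free B -> B *m B^T \in unitmx.
Proof.
move=> fB; rewrite -row_free_unit -kermx_eq0; apply/eqP.
have K : kermx (B *m B^T) *m B = 0 by apply: sq_ker; rewrite -mulmxA mulmx_ker.
apply/eqP; rewrite -submx0.
move/eqP: K; rewrite -sub_kermx => /submx_trans; apply.
by move: fB; rewrite -kermx_eq0 => /eqP ->; rewrite submx_refl.
Qed.

Lemma penrose_fact (R : realType) m n r (C : 'M[R]_(m, r)) (F : 'M[R]_(r, n)) :
  C^T *m C \in unitmx -> F *m F^T \in unitmx ->
  penrose (C *m F) (F^T *m invmx (F *m F^T) *m invmx (C^T *m C) *m C^T).
Proof.
move=> uC uF.
have AX : (C *m F) *m (F^T *m invmx (F *m F^T) *m invmx (C^T *m C) *m C^T)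
          = C *m invmx (C^T *m C) *m C^T.
  by rewrite !mulmxA -(mulmxA C F) -(mulmxA C) mulmxV // mulmx1.
have XA : (F^T *m invmx (F *m F^T) *m invmx (C^T *m C) *m C^T) *m (C *m F)
          = F^T *m invmx (F *m F^T) *m F.
  rewrite -!mulmxA; congr (_ *m (_ *m _)).
  by rewrite (mulmxA C^T C F) mulmxA mulVmx // mul1mx.
split.
- rewrite AX !mulmxA -(mulmxA _ C^T C) mulmxKV //.
- by rewrite XA !mulmxA -(mulmxA (F^T *m invmx (F *m F^T)) F F^T) mulmxKV.
- by rewrite AX !trmx_mul trmx_inv trmxK !trmx_mul trmxK !mulmxA.
- by rewrite XA !trmx_mul trmx_inv trmxK !trmx_mul trmxK !mulmxA.
Qed.

Lemma pinv_exists (R : realType) m n (A : 'M[R]_(m, n)) : exists X, penrose A X.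
Proof.
set C := col_base A; set F := row_base A.
have uC : C^T *m C \in unitmx.
  have := @gram_unit R _ _ C^T; rewrite trmxK; apply.
  by rewrite /row_free mxrank_tr; exact: col_base_full.
have uF : F *m F^T \in unitmx by apply: gram_unit; exact: row_base_free.
have := @penrose_fact R _ _ _ C F uC uF; rewrite mulmx_base => P.
by eexists; exact: P.
Qed.

Arguments pinv_exists {R m n}.

Lemma pinv_penrose (R : realType) m n (A : 'M[R]_(m, n)) : penrose A (pinv A).
Proof. exact: (epsilon_spec (inhabits 0) (penrose A) (pinv_exists A)). Qed.

Arguments pinv_penrose {R m n}.

Lemma pinv_range (R : realType) m n (A : 'M[R]_(m, n)) :
  range_sub (pinv A) (A^T *m A).
Proof.
have [h1 h2 h3 h4] := pinv_penrose A.
set P := pinv A in h1 h2 h3 h4 *.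
have eAt : A^T = A^T *m A *m P.
  by rewrite -{1}h1 trmx_mul h3 mulmxA.
have eP : P = A^T *m A *m (P *m P^T *m P).
  rewrite -{1}h2 -h4 trmx_mul.
  by rewrite {1}eAt !mulmxA.
by rewrite /range_sub {1}eP trmx_mul submxMl.
Qed.

Arguments pinv_range {R m n}.

Theorem lemma3 (R : realType) (m n tau : nat) (A : 'M[R]_(m, n))
  (S : nat -> 'M[R]_(n, tau)) (X : nat -> 'M[R]_(n, m))
  (HX : forall k, X k.+1 = X k - A^T *m A *m S k
          *m pinv ((S k)^T *m A^T *m A *m A^T *m A *m S k)
          *m (S k)^T *m A^T *m (A *m X k - 1%:M))
  (H0 : range_sub (X 0%N) (A^T *m A)) :
  forall k, range_sub (X k - pinv A) (A^T *m A).
Proof.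
elim=> [|k IH].
  rewrite /range_sub linearB /= addmx_sub // eqmx_opp; exact: pinv_range.
rewrite HX /range_sub.
set B := A^T *m A in IH *.
rewrite -!(mulmxA B) addrAC linearB /= addmx_sub // eqmx_opp trmx_mul.
exact: submxMl.
Qed.
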